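(* Let $n$ elements be grouped into $k$ (possibly overlapping) clusters $\mathcal{N}_1,\dots,\mathcal{N}_k\subseteq[n]$, each element belonging to at least one and at most $\Delta$ clusters. Suppose a noiseless quantized oracle, queried with $(i,j)$, returns $1$ if $i$ and $j$ belong to a common cluster and $0$ otherwise. Assume that for every cluster $i\in[k]$, $\left|\mathcal{N}_i\setminus\bigcup_{j\neq i}\mathcal{N}_j\right|>\alpha n$ for some $\alpha>0$. Let $S$ have size with $\alpha|S|=\log k+\log n$. Then the following algorithm recovers the clusters using $\binom{|S|}{2}+|S|\cdot(n-|S|)$ queries (with high probability over the random choice of $S$): choose $S\subseteq[n]$ uniformly at random and query all pairs in $S$; form the graph on vertex set $S$ with an edge $\{i,j\}$ iff the oracle returns $1$; construct maximal cliques of this graph covering all its edges, each maximal clique forming a cluster; query each element outside $S$ with all elements of $S$ and assign it to every cluster all of whose elements it tests positive with.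
   Context: No statistical assumptions are made on the clusters; the algorithm does not need to know $\Delta$. *)

(* Defs.v *)
From HB Require Import structures.
From mathcomp Require Import all_boot all_order all_algebra.
From mathcomp Require Import reals exp.
Set Implicit Arguments. Unset Strict Implicit. Unset Printing Implicit Defensive.
Import Order.TTheory GRing.Theory Num.Theory.

Section Clustering.
Variables (n k : nat).

Definition oracle (N : 'I_k -> {set 'I_n}) (i j : 'I_n) : bool :=
  [exists c, (i \in N c) && (j \in N c)].

Variable O : 'I_n -> 'I_n -> bool.
Variable S : {set 'I_n}.

(* Graph on vertex set S: edge {x,y} iff x != y and the oracle returns 1. *)
Definition is_clique (C : {set 'I_n}) : bool :=
  (C \subset S) && [forall x in C, forall y in C, (x != y) ==> O x y].

Definition maximal_clique (C : {set 'I_n}) : bool :=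
  is_clique C && [forall D : {set 'I_n}, (is_clique D && (C \subset D)) ==> (D == C)].

Definition clique_cover (F : {set {set 'I_n}}) : bool :=
  [forall C in F, maximal_clique C]
  && [forall x in S, exists C in F, x \in C]
  && [forall x in S, forall y in S,
        ((x != y) && O x y) ==> [exists C in F, (x \in C) && (y \in C)]].

(* Irredundant (inclusion-minimal) such cover: what the algorithm constructs. *)
Definition irredundant_cover (F : {set {set 'I_n}}) : bool :=
  clique_cover F && [forall F' : {set {set 'I_n}}, (F' \proper F) ==> ~~ clique_cover F'].

Definition extend_cluster (C : {set 'I_n}) : {set 'I_n} :=
  C :|: [set x | (x \notin S) && [forall y in C, O x y]].

Definition algorithm_output (F : {set {set 'I_n}}) : {set {set 'I_n}} :=
  [set extend_cluster C | C in F].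

(* The queries made: all pairs inside S, and all pairs (x outside S, y in S),
   i.e. the 2-subsets of [n] meeting S. *)
Definition queried_pairs : {set {set 'I_n}} :=
  [set e : {set 'I_n} | (#|e| == 2) && (e :&: S != set0)].

End Clustering.

(* Main.v *)
Require Import Defs.
From HB Require Import structures.
From mathcomp Require Import all_boot all_order all_algebra.
From mathcomp Require Import reals exp.
From mathcomp Require Import sequences zify ring.
Import Order.TTheory GRing.Theory Num.Theory.

Lemma binom_ineq a b s : (a <= b)%N -> ('C(a,s) * b ^ s <= 'C(b,s) * a ^ s)%N.
Proof.
move=> ab; elim: s => [|s IH]; first by rewrite !bin0.
rewrite -(leq_pmul2l (ltn0Sn s)) !mulnA !mul_bin_left !expnS.
have h : ((a - s) * b <= (b - s) * a)%N by nia.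
have := leq_mul h IH.
nia.
Qed.

Lemma card_bigcup_le (T I : finType) (P : pred I) (F : I -> {set T}) :
  (#|\bigcup_(i | P i) F i| <= \sum_(i | P i) #|F i|)%N.
Proof.
elim/big_ind2: _ => //; first by rewrite cards0.
move=> A x B y h1 h2. rewrite cardsU. lia.
Qed.

Lemma oracle_sym n k (N : 'I_k -> {set 'I_n}) x y : oracle N x y = oracle N y x.
Proof. by apply/existsP/existsP => -[c /andP[a b]]; exists c; rewrite a b. Qed.

Lemma oracle_priv n k (N : 'I_k -> {set 'I_n}) c p :
  p \in N c :\: \bigcup_(j | j != c) N j -> forall y, oracle N p y = (y \in N c).
Proof.
move=> /setDP [pc pnot] y; apply/existsP/idP.
- case=> c' /andP[pc' yc']; case: (eqVneq c' c) => [<- //|ne].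
  by move/negP: pnot => pnot; exfalso; apply: pnot; apply/bigcupP; exists c'.
- by move=> yc; exists c; rewrite pc yc.
Qed.

Lemma det_correct n k (N : 'I_k -> {set 'I_n}) (S : {set 'I_n}) :
  (forall x : 'I_n, (0 < #|[set c | x \in N c]|)%N) ->
  (forall c, exists2 p, p \in S & p \in N c :\: \bigcup_(j | j != c) N j) ->
  forall F, irredundant_cover (oracle N) S F ->
  algorithm_output (oracle N) S F = [set N c | c : 'I_k].
Proof.
move=> hcov hit F irr.
set O := oracle N.
pose T c := N c :&: S.
have Tcl c : is_clique O S (T c).
  rewrite /is_clique subsetIr /=; apply/forall_inP => x xT; apply/forall_inP => y yT.
  apply/implyP => _; apply/existsP; exists c.
  by rewrite !inE in xT yT; case/andP: xT => -> _; case/andP: yT => -> _.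
have sub c p C : p \in N c :\: \bigcup_(j | j != c) N j ->
    is_clique O S C -> p \in C -> C \subset T c.
  move=> pP /andP[CS /forall_inP Hc] pC; apply/subsetP => y yC.
  rewrite inE (subsetP CS y yC) andbT.
  case: (eqVneq y p) => [->|ne]; first by case/setDP: pP.
  move/forall_inP: (Hc _ pC) => /(_ y yC).
  by rewrite eq_sym ne /= /O (@oracle_priv _ _ _ _ _ pP).
have Tmax c : maximal_clique O S (T c).
  rewrite /maximal_clique Tcl /=; apply/forallP => D; apply/implyP => /andP[Dcl TD].
  rewrite eqEsubset TD andbT.
  have [p pS pP] := hit c.
  apply: (sub c p) => //; apply: (subsetP TD).
  by rewrite inE pS andbT; case/setDP: pP.
pose G := [set T c | c : 'I_k].
have Gcov : clique_cover O S G.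
  apply/andP; split; first (apply/andP; split).
  - by apply/forall_inP => C /imsetP[c _ ->].
  - apply/forall_inP => x xS; case/card_gt0P: (hcov x) => c; rewrite inE => xc.
    by apply/exists_inP; exists (T c); [apply: imset_f | rewrite inE xc xS].
  - apply/forall_inP => x xS; apply/forall_inP => y yS.
    apply/implyP => /andP[_ /existsP[c /andP[xc yc]]].
    by apply/exists_inP; exists (T c); [apply: imset_f | rewrite !inE xc yc xS yS].
case/andP: irr => Fcov /forallP Fmin.
have GF : G \subset F.
  apply/subsetP => C /imsetP[c _ ->].
  case/andP: Fcov => /andP[/forall_inP Fmax /forall_inP Fx] _.
  have [p pS pP] := hit c.
  case/exists_inP: (Fx p pS) => C' C'F pC'.
  case/andP: (Fmax _ C'F) => C'cl /forallP /(_ (T c)).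
  by rewrite Tcl (sub c p C') //= => /eqP ->.
have FG : F = G.
  case: (boolP (G \proper F)) => [prop|nprop].
    by have := Fmin G; rewrite prop Gcov.
  rewrite properE GF /= negbK in nprop.
  by apply/eqP; rewrite eqEsubset nprop GF.
rewrite /algorithm_output FG -imset_comp; apply: eq_imset => c /=.
apply/setP => x; rewrite /extend_cluster [in LHS]inE [x \in T c]inE [x \in [set _ | _]]inE.
case: (boolP (x \in S)) => xS /=; first by rewrite andbT orbF.
idtac.
rewrite andbF /=.
apply/forall_inP/idP.
- move=> H; have [p pS pP] := hit c.
  have pT : p \in T c by rewrite inE pS andbT; case/setDP: pP.
  by have := H p pT; rewrite /O oracle_sym (@oracle_priv _ _ _ _ _ pP).
- by move=> xc y; rewrite inE => /andP[yc _]; apply/existsP; exists c; rewrite xc yc.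
Qed.

Lemma bin2_add a s : 'C(a + s, 2) = ('C(a, 2) + 'C(s, 2) + s * a)%N.
Proof.
elim: s => [|s IH]; first by rewrite addn0 bin0n mul0n !addn0.
rewrite addnS !binS !bin1 IH; lia.
Qed.

Lemma queried_card n (S : {set 'I_n}) s : #|S| = s -> (s <= n)%N ->
  #|queried_pairs S| = ('C(s, 2) + s * (n - s))%N.
Proof.
move=> hS sn.
pose A := [set e : {set 'I_n} | #|e| == 2].
pose B := [set e : {set 'I_n} | e \subset ~: S].
have -> : queried_pairs S = A :\: B.
  apply/setP => e; rewrite !inE setI_eq0 disjoints_subset; by rewrite andbC.
have hA : #|A| = 'C(n, 2) by rewrite card_draws card_ord.
have hAB : #|A :&: B| = 'C(n - s, 2).
  have -> : A :&: B = [set e : {set 'I_n} | e \subset ~: S & #|e| == 2].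
    by apply/setP => e; rewrite !inE andbC.
  rewrite cards_draws; congr 'C(_, _).
  have := cardsC S; rewrite hS card_ord => h; lia.
have := cardsID B A; rewrite hA hAB.
have := bin2_add (n - s) s; rewrite subnK //.
move=> h1 h2; rewrite h1 -addnA in h2; exact: addnI h2.
Qed.

Local Open Scope ring_scope.

Lemma bad_bound (R : realType) n k m s (alpha : R) : (0 < k)%N -> (m <= n)%N ->
  alpha * n%:R < m%:R -> alpha * s%:R = ln (k%:R : R) + ln (n%:R : R) ->
  'C(n - m, s)%:R <= 'C(n, s)%:R * ((k%:R : R) * n%:R)^-1.
Proof.
move=> k0 mn am hs.
have n0 : (0 < n)%N.
  case: n mn am {hs} => [|n'] //; rewrite leqn0 => /eqP ->; by rewrite mulr0 ltxx.
have n0R : (0 : R) < n%:R by rewrite ltr0n.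
have k0R : (0 : R) < k%:R by rewrite ltr0n.
have hnat := binom_ineq _ _ s (leq_subr m n).
have h1 : ('C(n - m, s)%:R : R) <= 'C(n, s)%:R * ((n - m)%:R / n%:R) ^+ s.
  rewrite expr_div_n mulrA ler_pdivlMr ?exprn_gt0 //.
  by rewrite -!natrX -!natrM ler_nat.
apply: le_trans h1 _; apply: ler_wpM2l => //.
have h2 : ((n - m)%:R / n%:R : R) <= expR (- alpha).
  apply: le_trans (expR_ge1Dx _).
  rewrite natrB // mulrBl divff ?gt_eqF // lerD2l lerN2.
  by rewrite ler_pdivlMr // ltW // mulrC.
apply: le_trans (lerXn2r s _ _ h2) _; rewrite ?nnegrE ?divr_ge0 ?expR_ge0 //.
by rewrite -expRM_natr mulNr hs expRN expRD !lnK ?posrE //.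
Qed.

Theorem theorem8 (R : realType) (n k Delta s : nat)
    (N : 'I_k -> {set 'I_n}) (alpha : R) :
  (forall x : 'I_n, (0 < #|[set c | x \in N c]| <= Delta)%N) ->
  0 < alpha ->
  (forall c : 'I_k, alpha * n%:R < #|N c :\: \bigcup_(j | j != c) N j|%:R) ->
  alpha * s%:R = ln (k%:R : R) + ln (n%:R : R) ->
  (s <= n)%N ->
  (forall S : {set 'I_n}, #|S| = s ->
     #|queried_pairs S| = ('C(s, 2) + s * (n - s))%N)
  /\
  (#|[set S : {set 'I_n} | (#|S| == s) &&
       [forall F : {set {set 'I_n}},
          irredundant_cover (oracle N) S F ==>
          (algorithm_output (oracle N) S F == [set N c | c : 'I_k])]]|%:R
     / #|[set S : {set 'I_n} | #|S| == s]|%:R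
   >= 1 - (n%:R : R)^-1).
Proof.
move=> hcl ha hpriv hs sn; split; first by move=> S hS; apply: queried_card.
set Good := [set S : {set 'I_n} | _].
set U := [set S : {set 'I_n} | #|S| == s].
pose P c := N c :\: \bigcup_(j | j != c) N j.
pose Bad c := [set S : {set 'I_n} | S \subset ~: P c & #|S| == s].
have hcov x : (0 < #|[set c | x \in N c]|)%N by case/andP: (hcl x).
have cardU : #|U| = 'C(n, s) by rewrite card_draws card_ord.
have C0 : (0 < 'C(n, s))%N by rewrite bin_gt0.
have UG : U \subset Good :|: \bigcup_c Bad c.
  apply/subsetP => S; rewrite inE => hS.
  case: (boolP [forall c, ~~ (S \subset ~: P c)]) => [/forallP hit|].
    rewrite inE; apply/orP; left; rewrite inE hS /=.
    apply/forallP => F; apply/implyP => irr; apply/eqP.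
    apply: det_correct irr => // c.
    case/subsetPn: (hit c) => p pS pP; exists p => //.
    by move: pP; rewrite inE negbK.
  rewrite negb_forall => /existsP [c]; rewrite negbK => Sc.
  rewrite inE; apply/orP; right; apply/bigcupP; exists c => //.
  by rewrite inE Sc hS.
have hcard : (#|U| <= #|Good| + \sum_c #|Bad c|)%N.
  apply: leq_trans (subset_leq_card UG) _.
  rewrite cardsU; apply: leq_trans (leq_subr _ _) _.
  by rewrite leq_add2l card_bigcup_le.
have hsum : \sum_c (#|Bad c|%:R : R) <= 'C(n, s)%:R * (n%:R)^-1.
  case: (posnP k) => [k0|kpos].
    rewrite big1 ?mulr_ge0 ?invr_ge0 //.
    by move=> [i hi]; exfalso; rewrite k0 in hi.
  pose c0 : 'I_k := Ordinal kpos.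
  have n0 : (0 < n)%N.
    case: (posnP n) => // n0'.
    have h1 : (#|P c0| <= n)%N by move: (max_card (P c0)); rewrite card_ord.
    have h3 := leq_trans h1 (eq_leq n0'); rewrite leqn0 in h3.
    have h2 : alpha * n%:R < #|P c0|%:R := hpriv c0.
    have h4 : (n%:R : R) = 0 by rewrite n0'.
    by rewrite (eqP h3) h4 mulr0 ltxx in h2.
  have -> : 'C(n, s)%:R * (n%:R)^-1 = \sum_(c < k) ('C(n, s)%:R * ((k%:R * n%:R)^-1 : R)).
    rewrite sumr_const card_ord -mulr_natr; field.
    by rewrite !pnatr_eq0 -!lt0n n0 kpos.
  apply: ler_sum => c _.
  have mn : (#|P c| <= n)%N by move: (max_card (P c)); rewrite card_ord.
  have -> : #|Bad c| = 'C(n - #|P c|, s).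
    rewrite cards_draws; congr 'C(_, _).
    by have := cardsC (P c); rewrite card_ord => h; lia.
  exact: (bad_bound R n k #|P c| s alpha kpos mn (hpriv c) hs).
rewrite -/U cardU ler_pdivlMr ?ltr0n //.
have hR : ('C(n, s)%:R : R) <= #|Good|%:R + \sum_c (#|Bad c|%:R : R).
  by rewrite -natr_sum -natrD ler_nat -cardU.
rewrite mulrBl mul1r mulrC.
apply: le_trans (_ : 'C(n, s)%:R - 'C(n, s)%:R * (n%:R)^-1 <= _).
  by [].
by rewrite lerBlDr; apply: le_trans hR _; rewrite lerD2l.
Qed.
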